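(* Let $\sqsubseteq$ be any of the stochastic simulation pre-orders $\sqsubseteq^S_i$, $\sqsubseteq^S_\pi$, $\sqsubseteq^S_m$. There is no stochastic CA $\mathcal{U}$ such that $\mathcal{B}\sqsubseteq\mathcal{U}$ for every stochastic CA $\mathcal{B}$ (i.e. there is no $\sqsubseteq$-universal stochastic CA).
   Context: A stochastic CA is $(Q,R,V,V',f)$ with $Q$ finite states, $R$ finite random symbols, $V=\{v_1,\dots,v_r\}$, $V'=\{v'_1,\dots,v'_{r'}\}$ finite subsets of $\mathbb{Z}$, $f:Q^r\times R^{r'}\to Q$; explicit global function $F(c,s)_z=f((c_{z+v_1},\dots,c_{z+v_r}),(s_{z+v'_1},\dots,s_{z+v'_{r'}}))$. $\nu_R$ is the uniform Bernoulli measure on $R^{\mathbb{Z}}$; the stochastic global function $S_F(c)$ is the law of $F(c,s)$ for $s\sim\nu_R$. Iterates: $F^0(c)=c$, $F^{t+1}(c,s^1,\dots,s^{t+1})=F(F^t(c,s^1,\dots,s^t),s^{t+1})$. Restriction: for injective $i:Q'\to Q$ with $Y=i(Q')^{\mathbb{Z}}$ satisfying $F(Y,R^{\mathbb{Z}})\subseteq Y$, the $i$-restriction has states $Q'$, random symbols $R$, explicit global function $I^{-1}(F(I(c),s))$ ($I$ the cellwise extension of $i$). Projection: for surjective $\pi:Q\to Q'$ with cellwise extension $\Pi$ such that $\Pi(F(c,s))=\Pi(F(c',s))$ whenever $\Pi(c)=\Pi(c')$, the $\pi$-projection has states $Q'$, random symbols $R$, explicit global function $(c',s)\mapsto\Pi(F(c,s))$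 for any $c\in\Pi^{-1}(c')$. Rescaling with $m,t\ge1,k\in\mathbb{Z}$: $\mathcal{A}^{\langle m,t,k\rangle}$ has states $Q^m$, random symbols $(R^m)^t$, explicit global function $b_m\circ\sigma_k\circ F^t(b_m^{-1}(c),b_m^{-1}(s^1),\dots,b_m^{-1}(s^t))$ where $s^i_j=(s_j)_i$, $\sigma_k(c)_z=c_{z+k}$, $b_m(c)_z=(c_{mz},\dots,c_{mz+m-1})$. $\mathcal{A}_1\sqsubseteq^S_i\mathcal{A}_2$ (resp. $\sqsubseteq^S_\pi$, $\sqsubseteq^S_m$) iff there are $m_1,m_2,t_1,t_2,k_1,k_2$ such that $\mathcal{A}_1^{\langle m_1,t_1,k_1\rangle}$ has the same stochastic global function as some $i$-restriction (resp. some $\pi$-projection, resp. some $\pi$-projection of some $i$-restriction) of $\mathcal{A}_2^{\langle m_2,t_2,k_2\rangle}$. *)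

(* Defs.v *)
From mathcomp Require Import all_boot all_order all_algebra.
Set Implicit Arguments. Unset Strict Implicit. Unset Printing Implicit Defensive.
Import Order.TTheory GRing.Theory Num.Theory.

(* Cells are indexed by Z = int. Q, R finite, R nonempty (needed for   *)
(* the uniform Bernoulli measure nu_R to exist).                       *)
Record sca := SCA {
  sQ : finType;
  sR : finType;
  sR_nonempty : (0 < #|sR|)%N;
  sr : nat;
  sr' : nat;
  sV : sr.-tuple int;
  sV' : sr'.-tuple int;
  sf : sr.-tuple sQ -> sr'.-tuple sR -> sQ }.

Definition gf (A : sca) : (int -> sQ A) -> (int -> sR A) -> (int -> sQ A) :=
  fun c s z => sf [tuple c (z + tnth (sV A) i)%R | i < sr A]
                  [tuple s (z + tnth (sV' A) j)%R | j < sr' A].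
Arguments gf : clear implicits.

(* The uniform Bernoulli measure nu_R on cylinder events of R^Z.       *)
(* An event E is determined by the window {a, ..., a+n-1}; then        *)
(* nu_R(E) = #{u in R^n | E(ext u)} / |R|^n.                           *)
Definition determined (R : Type) (E : pred (int -> R)) (a : int) (n : nat) :=
  forall s s' : int -> R,
    (forall i : 'I_n, s (a + i%:Z)%R = s' (a + i%:Z)%R) -> E s = E s'.

Definition ext (R : Type) (r0 : R) (a : int) (n : nat) (u : {ffun 'I_n -> R})
  : int -> R :=
  fun z => if (0 <= z - a)%R then
             (if @insub _ _ 'I_n `|z - a|%N is Some i then u i else r0)
           else r0.

Definition prob_is (R : finType) (E : pred (int -> R)) (p : rat) : Prop :=
  exists (a : int) (n : nat), determined E a n /\
    exists r0 : R,
      p = ((#|[set u : {ffun 'I_n -> R} | E (ext r0 a u)]|)%:R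
           / (#|R| ^ n)%:R)%R.

Definition cyl {Q : finType} {R : Type} (X : (int -> R) -> (int -> Q))
  (a : int) (n : nat) (w : {ffun 'I_n -> Q}) : pred (int -> R) :=
  fun s => [forall i : 'I_n, X s (a + i%:Z)%R == w i].
Arguments cyl {Q R} X a n w.

(* the law of X under nu_R1 equals the law of Y under nu_R2
   (equality of probability measures on Q^Z, tested on cylinders) *)
Definition same_law (Q R1 R2 : finType)
  (X : (int -> R1) -> (int -> Q)) (Y : (int -> R2) -> (int -> Q)) : Prop :=
  forall (a : int) (n : nat) (w : {ffun 'I_n -> Q}),
    exists p : rat, prob_is (cyl X a n w) p /\ prob_is (cyl Y a n w) p.

Definition same_sgf (Q R1 R2 : finType)
  (F : (int -> Q) -> (int -> R1) -> (int -> Q))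
  (G : (int -> Q) -> (int -> R2) -> (int -> Q)) : Prop :=
  forall c, same_law (F c) (G c).

Lemma modz_ltn (x : int) (m : nat) : (0 < m)%N -> (`|(x %% m%:Z)%Z|%N < m)%N.
Proof.
move=> Hm.
have H1 : (0 <= (x %% m%:Z)%Z)%R by apply: modz_ge0; rewrite eqz_nat -lt0n.
have H2 : ((x %% m%:Z)%Z < m%:Z)%R by apply: ltz_pmod; rewrite ltz_nat.
by rewrite -ltz_nat gez0_abs.
Qed.

Definition bm (T : Type) (m : nat) (c : int -> T) : int -> m.-tuple T :=
  fun z => [tuple c (z * m%:Z + i%:Z)%R | i < m].
Arguments bm {T} m c z.

Definition bm_inv (T : Type) (m : nat) (Hm : (0 < m)%N) (c : int -> m.-tuple T)
  : int -> T :=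
  fun x => tnth (c (x %/ m%:Z)%Z) (Ordinal (modz_ltn x Hm)).

Definition shift (T : Type) (k : int) (c : int -> T) : int -> T :=
  fun z => c (z + k)%R.

Definition iterF (Q R : Type) (F : (int -> Q) -> (int -> R) -> (int -> Q))
  (c : int -> Q) (ss : seq (int -> R)) : int -> Q := foldl F c ss.

(* explicit global function of A^<m,t,k>, where s^i_j = (s_j)_i *)
Definition rescale (Q R : Type) (F : (int -> Q) -> (int -> R) -> (int -> Q))
  (m : nat) (Hm : (0 < m)%N) (t : nat) (k : int)
  : (int -> m.-tuple Q) -> (int -> t.-tuple (m.-tuple R)) -> (int -> m.-tuple Q) :=
  fun c s =>
    bm m (shift k (iterF F (bm_inv Hm c)
            [seq bm_inv Hm (fun j => tnth (s j) i) | i <- enum 'I_t])).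
Arguments rescale {Q R} F {m} Hm t k _ _ _.

Definition restr_ok (Q' Q R : finType) (i : Q' -> Q)
  (F : (int -> Q) -> (int -> R) -> (int -> Q)) : Prop :=
  injective i /\
  forall (c : int -> Q) (s : int -> R),
    (forall z, exists q, c z = i q) -> forall z, exists q, F c s z = i q.

Definition restr (Q' Q R : finType) (i : Q' -> Q)
  (F : (int -> Q) -> (int -> R) -> (int -> Q))
  : (int -> Q') -> (int -> R) -> (int -> Q') :=
  fun c s z => odflt (c z) [pick x | i x == F (fun y => i (c y)) s z].

Definition proj_ok (Q Q' R : finType) (pi : Q -> Q')
  (F : (int -> Q) -> (int -> R) -> (int -> Q)) : Prop :=
  (forall y : Q', exists x, pi x = y) /\
  forall (c c' : int -> Q) (s : int -> R),
    (forall z, pi (c z) = pi (c' z)) ->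
    forall z, pi (F c s z) = pi (F c' s z).

(* G has the same stochastic global function as the pi-projection of F,
   whose explicit global function is (c', s) |-> Pi(F(c, s)) for any
   c in Pi^{-1}(c') *)
Definition same_sgf_proj (Q Q' R1 R : finType)
  (G : (int -> Q') -> (int -> R1) -> (int -> Q'))
  (pi : Q -> Q') (F : (int -> Q) -> (int -> R) -> (int -> Q)) : Prop :=
  forall (c' : int -> Q') (c : int -> Q), (forall z, pi (c z) = c' z) ->
    same_law (G c') (fun s z => pi (F c s z)).

Definition sim_i (A1 A2 : sca) : Prop :=
  exists (m1 : nat) (H1 : (0 < m1)%N) (t1 : nat) (k1 : int)
         (m2 : nat) (H2 : (0 < m2)%N) (t2 : nat) (k2 : int),
    (0 < t1)%N /\ (0 < t2)%N /\
    exists i : m1.-tuple (sQ A1) -> m2.-tuple (sQ A2),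
      restr_ok i (rescale (gf A2) H2 t2 k2) /\
      same_sgf (rescale (gf A1) H1 t1 k1) (restr i (rescale (gf A2) H2 t2 k2)).

Definition sim_pi (A1 A2 : sca) : Prop :=
  exists (m1 : nat) (H1 : (0 < m1)%N) (t1 : nat) (k1 : int)
         (m2 : nat) (H2 : (0 < m2)%N) (t2 : nat) (k2 : int),
    (0 < t1)%N /\ (0 < t2)%N /\
    exists pi : m2.-tuple (sQ A2) -> m1.-tuple (sQ A1),
      proj_ok pi (rescale (gf A2) H2 t2 k2) /\
      same_sgf_proj (rescale (gf A1) H1 t1 k1) pi (rescale (gf A2) H2 t2 k2).

Definition sim_m (A1 A2 : sca) : Prop :=
  exists (m1 : nat) (H1 : (0 < m1)%N) (t1 : nat) (k1 : int)
         (m2 : nat) (H2 : (0 < m2)%N) (t2 : nat) (k2 : int),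
    (0 < t1)%N /\ (0 < t2)%N /\
    exists (Q'' : finType) (i : Q'' -> m2.-tuple (sQ A2))
           (pi : Q'' -> m1.-tuple (sQ A1)),
      restr_ok i (rescale (gf A2) H2 t2 k2) /\
      proj_ok pi (restr i (rescale (gf A2) H2 t2 k2)) /\
      same_sgf_proj (rescale (gf A1) H1 t1 k1) pi
                    (restr i (rescale (gf A2) H2 t2 k2)).

(* Main.v *)
Require Import Defs.
From mathcomp Require Import all_boot all_order all_algebra.
Import Order.TTheory GRing.Theory Num.Theory.

Definition Bn (n : nat) : sca :=
  @SCA bool 'I_n.+2 (ltac:(by rewrite card_ord)) 1 1 [tuple 0%R] [tuple 0%R]
    (fun (_ : 1.-tuple bool) (s : 1.-tuple 'I_n.+2) => tnth s ord0 == ord0).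

Lemma foldl_const n t (c : int -> bool) (h : 'I_t -> int -> 'I_n.+2) r
  (s : seq 'I_t) :
  (forall i y, h i y = r) -> s != [::] ->
  forall y, foldl (gf (Bn n)) c (map h s) y = (r == ord0).
Proof.
move=> Hh; elim: s c => [|i s IH] c //= _ y.
case: s IH => [|j s] IH /=.
  by rewrite /gf /= tnth_mktuple Hh.
exact: (IH _ isT y).
Qed.

Definition sconst n m t (r : 'I_n.+2) : int -> t.-tuple (m.-tuple 'I_n.+2) :=
  fun _ => [tuple [tuple r | _ < m] | _ < t].

Lemma resc_const n m (Hm : (0 < m)%N) t (Ht : (0 < t)%N) k c r y :
  rescale (gf (Bn n)) Hm t k c (sconst n m t r) y = [tuple (r == ord0) | _ < m].
Proof.
apply: eq_from_tnth => i; rewrite /rescale /bm !tnth_mktuple /shift /iterF.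
rewrite (@foldl_const n t _ (fun i0 : 'I_t => bm_inv Hm (fun j => tnth (sconst n m t r j) i0)) r) //.
  by move=> i0 y0; rewrite /bm_inv /sconst !tnth_mktuple.
by rewrite -size_eq0 size_enum_ord -lt0n.
Qed.

Lemma ext_win (R : Type) (r0 : R) a n (u : {ffun 'I_n -> R}) (i : 'I_n) :
  ext r0 a u (a + i%:Z)%R = u i.
Proof.
rewrite /ext.
have -> : (a + i%:Z - a = i%:Z)%R by rewrite addrC addKr.
by rewrite lez_nat absz_nat valK.
Qed.

Lemma prob_strict (R : finType) (E : pred (int -> R)) p s0 s1 :
  E s0 -> ~~ E s1 -> prob_is E p ->
  exists k n, p = (k%:R / (#|R| ^ n)%:R)%R /\ (0 < k)%N /\ (k < #|R| ^ n)%N.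
Proof.
move=> E0 E1 [a [n [Hd [r0 ->]]]].
set A := [set u : {ffun 'I_n -> R} | E (ext r0 a u)].
exists #|A|, n; split => //.
have key : forall s, E (ext r0 a [ffun i : 'I_n => s (a + i%:Z)%R]) = E s.
  by move=> s; apply: Hd => i; rewrite ext_win ffunE.
split.
  apply/card_gt0P; exists [ffun i : 'I_n => s0 (a + i%:Z)%R].
  by rewrite inE key.
have -> : (#|R| ^ n = #|{ffun 'I_n -> R}|)%N by rewrite card_ffun card_ord.
rewrite -cardsT; apply: proper_card; rewrite properT.
apply/eqP => HA.
have : [ffun i : 'I_n => s1 (a + i%:Z)%R] \in A by rewrite HA inE.
by rewrite inE key (negbTE E1).
Qed.

Lemma key n m1 (H1 : (0 < m1)%N) t1 (Ht1 : (0 < t1)%N) k1 c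
  (RU : finType) (Y : (int -> RU) -> int -> m1.-tuple bool) :
  coprime n.+2 #|RU| ->
  ~ same_law (rescale (gf (Bn n)) H1 t1 k1 c) Y.
Proof.
move=> Hcop Hsl.
set X := rescale (gf (Bn n)) H1 t1 k1 c.
pose w : {ffun 'I_1 -> m1.-tuple (sQ (Bn n))} := [ffun _ => [tuple true | _ < m1]].
have Hw : forall i, w i = [tuple true | _ < m1] :> m1.-tuple (sQ (Bn n)) by move=> i; rewrite ffunE.
have [p [Pb Pu]] := Hsl 0%R 1%N w.
have E0 : cyl X 0%R 1 w (sconst n m1 t1 (@ord0 n.+1)).
  apply/forallP => i; rewrite /X (@resc_const n m1 H1 t1 Ht1).
  apply/eqP; apply: (etrans _ (esym (Hw i))).
  by apply/eq_from_tnth => j; rewrite !tnth_mktuple.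
have E1 : ~~ cyl X 0%R 1 w (sconst n m1 t1 (@Ordinal n.+2 1 isT)).
  apply/forallP => /(_ ord0); rewrite /X (@resc_const n m1 H1 t1 Ht1) => /eqP /(fun h => etrans h (Hw ord0)).
  move/(congr1 (fun x => tnth x (Ordinal H1))).
  by rewrite !tnth_mktuple.
have [k [nn [Hp [Hk0 HkD]]]] := @prob_strict _ _ p _ _ E0 E1 Pb.
rewrite !card_tuple card_ord in Hp HkD.
move: Pu => [a2 [n2 [_ [r2 Hp2]]]].
move: Hp2; rewrite Hp.
set k2 := #|_|.
set D := (((n.+2 ^ m1) ^ t1) ^ nn)%N in Hp HkD *.
have D1 : (0 < D)%N by rewrite /D !expn_gt0.
have D2 : (0 < #|RU| ^ n2)%N.
  rewrite expn_gt0; apply/orP; left; rewrite lt0n; apply/eqP => H0; move: Hcop; rewrite H0 /coprime gcdn0.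
  done.
move/eqP; rewrite eqr_div ?pnatr_eq0 -?lt0n // -!natrM eqr_nat => /eqP Heq.
have Hc : coprime D (#|RU| ^ n2).
  by rewrite /D -!expnM; apply: coprimeXr; apply: coprimeXl.
have : (D %| k * #|RU| ^ n2)%N.
  by rewrite Heq dvdn_mull.
rewrite Gauss_dvdl // => /dvdn_leq => /(_ Hk0).
by rewrite leqNgt HkD.
Qed.

Lemma pick_n (U : sca) : exists n, coprime n.+2 #|sR U|.
Proof.
have [p Hlt Hp] := prime_above #|sR U|.
have Hp2 : (1 < p)%N by apply: prime_gt1.
exists p.-2; have -> : p.-2.+2 = p by case: p Hp2 {Hlt Hp} => [|[|p]].
rewrite prime_coprime //; apply/negP => /dvdn_leq.
have := sR_nonempty U => H0 /(_ H0); by rewrite leqNgt Hlt.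
Qed.

Lemma cop_lift q (R : finType) t m :
  coprime q #|R| -> coprime q #|{: t.-tuple (m.-tuple R)}|.
Proof. by move=> H; rewrite !card_tuple -expnM; apply: coprimeXr. Qed.

Theorem corollary1 :
  (~ exists U : sca, forall B : sca, sim_i B U) /\
  (~ exists U : sca, forall B : sca, sim_pi B U) /\
  (~ exists U : sca, forall B : sca, sim_m B U).
Proof.
split; last split.
- move=> [U HU]; have [n Hn] := pick_n U.
  have [m1 [H1 [t1 [k1 [m2 [H2 [t2 [k2 [Ht1 [Ht2 [i [_ Hs]]]]]]]]]]]] := HU (Bn n).
  apply: (@key n m1 H1 t1 Ht1 k1 _ _ _ (@cop_lift _ _ t2 m2 Hn)).
  exact: (Hs (fun _ => [tuple true | _ < m1])).
- move=> [U HU]; have [n Hn] := pick_n U.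
  have [m1 [H1 [t1 [k1 [m2 [H2 [t2 [k2 [Ht1 [Ht2 [pi [[Hsur _] Hs]]]]]]]]]]]] := HU (Bn n).
  have [x0 _] := Hsur [tuple true | _ < m1].
  apply: (@key n m1 H1 t1 Ht1 k1 _ _ _ (@cop_lift _ _ t2 m2 Hn)).
  exact: (Hs (fun _ => pi x0) (fun _ => x0) (fun _ => erefl)).
- move=> [U HU]; have [n Hn] := pick_n U.
  have [m1 [H1 [t1 [k1 [m2 [H2 [t2 [k2 [Ht1 [Ht2 [Q [i [pi [_ [[Hsur _] Hs]]]]]]]]]]]]]]] := HU (Bn n).
  have [x0 _] := Hsur [tuple true | _ < m1].
  apply: (@key n m1 H1 t1 Ht1 k1 _ _ _ (@cop_lift _ _ t2 m2 Hn)).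
  exact: (Hs (fun _ => pi x0) (fun _ => x0) (fun _ => erefl)).
Qed.
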